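(* Let $|q|<1$, let $x,y$ be complex numbers and let $n,m\ge 0$ be integers. Then $$\sum_{k=0}^{\min\{n,m\}}{n\brack k}{m\brack k}(q;q)_k\,x^k\,h_{n+m-2k}(x|q)=\left(\sum_{k=0}^n{n\brack k}y^k\,h_{n-k}(x,y|q)\right)\left(\sum_{j=0}^m{m\brack j}y^j\,h_{m-j}(x,y|q)\right).$$
   Context: Throughout $|q|<1$. $(a;q)_n=\prod_{j=0}^{n-1}(1-aq^j)$, ${n\brack k}=\frac{(q;q)_n}{(q;q)_k(q;q)_{n-k}}$. The Rogers–Szegő polynomials are $h_n(x|q)=\sum_{k=0}^n{n\brack k}x^k$. $P_n(x,y)=(x-y)(x-qy)\cdots(x-q^{n-1}y)$ with $P_0=1$, and the bivariate Rogers–Szegő polynomials are $h_n(x,y|q)=\sum_{k=0}^n{n\brack k}P_k(x,y)$. *)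

(* Defs.v *)
From mathcomp Require Import all_boot all_order all_algebra.
From mathcomp Require Import complex.
From mathcomp Require Import reals.
Set Implicit Arguments. Unset Strict Implicit. Unset Printing Implicit Defensive.
Import Order.TTheory GRing.Theory Num.Theory.
Local Open Scope ring_scope.

Definition qpoch {F : fieldType} (a q : F) (n : nat) : F :=
  \prod_(j < n) (1 - a * q ^+ j).

(* Gaussian binomial [n k] = (q;q)_n / ((q;q)_k (q;q)_{n-k}), used for k <= n *)
Definition qbinom {F : fieldType} (q : F) (n k : nat) : F :=
  qpoch q q n / (qpoch q q k * qpoch q q (n - k)).

Definition RS {F : fieldType} (q x : F) (n : nat) : F :=
  \sum_(k < n.+1) qbinom q n k * x ^+ k.

Definition Pn {F : fieldType} (q x y : F) (n : nat) : F :=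
  \prod_(j < n) (x - q ^+ j * y).

Definition RS2 {F : fieldType} (q x y : F) (n : nat) : F :=
  \sum_(k < n.+1) qbinom q n k * Pn q x y k.

(* Main.v *)
Require Import Defs.
From mathcomp Require Import all_boot all_order all_algebra.
From mathcomp Require Import complex.
From mathcomp Require Import reals.
From mathcomp Require Import ring zify.
Set Implicit Arguments. Unset Strict Implicit. Unset Printing Implicit Defensive.
Import Order.TTheory GRing.Theory Num.Theory.
Local Open Scope ring_scope.
Definition B {F : fieldType} (q : F) (n k : nat) : F :=
  if (k <= n)%N then qbinom q n k else 0.

Lemma qpS (F : fieldType) (q : F) n : qpoch q q n.+1 = qpoch q q n * (1 - q ^+ n.+1).
Proof. by rewrite /qpoch big_ord_recr /= exprS. Qed.

Lemma qp0 (F : fieldType) (q : F) : qpoch q q 0 = 1.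
Proof. by rewrite /qpoch big_ord0. Qed.

Lemma qp_neq0 (F : fieldType) (q : F) (hq : forall j, 1 - q ^+ j.+1 != 0) n :
  qpoch q q n != 0.
Proof. elim: n => [|n IH]; first by rewrite qp0 oner_neq0.
by rewrite qpS mulf_neq0. Qed.

Lemma Bkd (F : fieldType) (q : F) k d :
  B q (k + d)%N k = qpoch q q (k + d)%N / (qpoch q q k * qpoch q q d).
Proof. by rewrite /B leq_addr /qbinom addKn. Qed.

Lemma Bgt (F : fieldType) (q : F) n k : (n < k)%N -> B q n k = 0.
Proof. by rewrite /B ltnNge => /negbTE ->. Qed.

Lemma Bnn (F : fieldType) (q : F) (hq : forall j, 1 - q ^+ j.+1 != 0) n : B q n n = 1.
Proof. have := Bkd q n 0; rewrite addn0 qp0 mulr1 => ->.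
by rewrite divff // qp_neq0. Qed.

Lemma Bn0 (F : fieldType) (q : F) (hq : forall j, 1 - q ^+ j.+1 != 0) n : B q n 0 = 1.
Proof. have := Bkd q 0 n; rewrite add0n qp0 mul1r => ->.
by rewrite divff // qp_neq0. Qed.
Lemma P1kd (F : fieldType) (q : F) (hq : forall j, 1 - q ^+ j.+1 != 0) k d :
  B q (k.+1 + d).+1%N k.+1 = B q (k.+1 + d)%N k + q ^+ k.+1 * B q (k.+1 + d)%N k.+1.
Proof.
have nz := qp_neq0 hq.
rewrite -addnS Bkd (addSnnS k d) Bkd -(addSnnS k d) Bkd.
rewrite (addnS k.+1 d) qpS -(addnS k.+1 d) exprD (qpS q k) (qpS q d).
have := hq k; have := hq d; have := nz (k.+1 + d)%N; have := nz k; have := nz d.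
move: (qpoch q q (k.+1 + d)) (qpoch q q k) (qpoch q q d) (q ^+ k.+1) (q ^+ d.+1) => a b c u v.
move=> *. field; repeat (apply/andP; split); assumption.
Qed.

Lemma P1 (F : fieldType) (q : F) (hq : forall j, 1 - q ^+ j.+1 != 0) n k :
  B q n.+1 k.+1 = B q n k + q ^+ k.+1 * B q n k.+1.
Proof.
case: (ltngtP k n) => [lt|gt|->].
- have [d ->] : exists d, n = (k.+1 + d)%N by exists (n - k.+1)%N; lia.
  exact: P1kd.
- by rewrite !Bgt ?mulr0 ?addr0 // ltnS ltnW.
- by rewrite !Bnn // (Bgt _ (ltnSn n)) mulr0 addr0.
Qed.

Lemma P2kd (F : fieldType) (q : F) (hq : forall j, 1 - q ^+ j.+1 != 0) k d :
  B q (k.+1 + d).+1%N k.+1 = q ^+ d.+1 * B q (k.+1 + d)%N k + B q (k.+1 + d)%N k.+1.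
Proof.
have nz := qp_neq0 hq.
rewrite -addnS Bkd (addSnnS k d) Bkd -(addSnnS k d) Bkd.
rewrite (addnS k.+1 d) qpS -(addnS k.+1 d) exprD (qpS q k) (qpS q d).
have := hq k; have := hq d; have := nz (k.+1 + d)%N; have := nz k; have := nz d.
move: (qpoch q q (k.+1 + d)) (qpoch q q k) (qpoch q q d) (q ^+ k.+1) (q ^+ d.+1) => a b c u v.
move=> *. field; repeat (apply/andP; split); assumption.
Qed.

Lemma P2 (F : fieldType) (q : F) (hq : forall j, 1 - q ^+ j.+1 != 0) n k :
  B q n.+1 k.+1 = q ^+ (n - k) * B q n k + B q n k.+1.
Proof.
case: (ltngtP k n) => [lt|gt|->].
- have [d ->] : exists d, n = (k.+1 + d)%N by exists (n - k.+1)%N; lia.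
  rewrite P2kd //; congr (_ ^+ _ * _ + _); lia.
- by rewrite !Bgt ?mulr0 ?addr0 // ltnS ltnW.
- by rewrite !Bnn // (Bgt _ (ltnSn n)) subnn expr0 mul1r addr0.
Qed.

Lemma Rkd (F : fieldType) (q : F) (hq : forall j, 1 - q ^+ j.+1 != 0) k d :
  B q (k.+1 + d)%N k.+1 * qpoch q q k.+1 = B q (k.+1 + d)%N k * qpoch q q k * (1 - q ^+ d.+1).
Proof.
have nz := qp_neq0 hq.
rewrite Bkd (addSnnS k d) Bkd.
rewrite (qpS q k) (qpS q d).
have := hq k; have := hq d; have := nz (k + d.+1)%N; have := nz k; have := nz d.
move: (qpoch q q (k + d.+1)) (qpoch q q k) (qpoch q q d) (q ^+ k.+1) (q ^+ d.+1) => a b c u v.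
move=> *. field; repeat (apply/andP; split); assumption.
Qed.

Lemma Rl (F : fieldType) (q : F) (hq : forall j, 1 - q ^+ j.+1 != 0) m k :
  B q m k.+1 * qpoch q q k.+1 = B q m k * qpoch q q k * (1 - q ^+ (m - k)).
Proof.
case: (ltngtP k m) => [lt|gt|->].
- have [d ->] : exists d, m = (k.+1 + d)%N by exists (m - k.+1)%N; lia.
  rewrite Rkd //; congr (_ * _ * (1 - _ ^+ _)); lia.
- by rewrite !Bgt ?mul0r // ltnS ltnW.
- by rewrite (Bgt _ (ltnSn m)) subnn expr0 subrr !mul0r mulr0.
Qed.

Lemma Qkd (F : fieldType) (q : F) (hq : forall j, 1 - q ^+ j.+1 != 0) j d :
  (1 - q ^+ (j + d).+1) * B q (j + d)%N j = (1 - q ^+ d.+1) * B q (j + d).+1%N j.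
Proof.
have nz := qp_neq0 hq.
rewrite Bkd -addnS Bkd.
rewrite (addnS j d) qpS -(addnS j d) exprD (qpS q d).
have := hq j; have := hq d; have := nz (j + d)%N; have := nz j; have := nz d.
move: (qpoch q q (j + d)) (qpoch q q j) (qpoch q q d) (q ^+ j) (q ^+ d.+1) => a b c u v.
move=> *. field; repeat (apply/andP; split); assumption.
Qed.

Lemma Ql (F : fieldType) (q : F) (hq : forall j, 1 - q ^+ j.+1 != 0) n j :
  (1 - q ^+ n) * B q n.-1 j = (1 - q ^+ (n - j)) * B q n j.
Proof.
case: n => [|n] /=; first by rewrite sub0n expr0 subrr !mul0r.
case: (leqP j n) => [le|gt].
- have [d ->] : exists d, n = (j + d)%N by exists (n - j)%N; lia.
  rewrite Qkd //. have -> : ((j + d).+1 - j)%N = d.+1 by lia. by [].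
- case: (ltngtP j n.+1) => [|lt2|->]; first by lia.
  + by rewrite !Bgt ?mulr0 // ltnW.
  + by rewrite (Bgt _ (ltnSn n)) subnn expr0 subrr !mul0r mulr0.
Qed.

Definition hB {F : fieldType} (q x : F) (N : nat) : F := \sum_(k < N.+1) B q N k * x ^+ k.

Lemma sum_ext (F : fieldType) (f : nat -> F) n K : (n <= K)%N ->
  (forall i, (n <= i)%N -> (i < K)%N -> f i = 0) ->
  \sum_(i < n) f i = \sum_(i < K) f i.
Proof.
move=> le H; have E : K = (n + (K - n))%N by rewrite subnKC.
rewrite [in RHS]E big_split_ord /= [X in _ = _ + X]big1 ?addr0 // => i _.
apply: H; first by rewrite leq_addr.
have := ltn_ord i; lia.
Qed.

Lemma hB_ext (F : fieldType) (q x : F) N K : (N < K)%N ->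
  hB q x N = \sum_(k < K) B q N k * x ^+ k.
Proof.
move=> lt; rewrite /hB (@sum_ext _ (fun k => B q N k * x ^+ k) N.+1 K lt) // => i le _.
by rewrite Bgt ?mul0r.
Qed.

Lemma Hl (F : fieldType) (q : F) (hq : forall j, 1 - q ^+ j.+1 != 0) M k :
  B q M k.+1 + B q M k = B q M.+1 k.+1 + (1 - q ^+ M) * B q M.-1 k.
Proof. rewrite P2 // Ql //. ring. Qed.

Lemma hrec (F : fieldType) (q x : F) (hq : forall j, 1 - q ^+ j.+1 != 0) M :
  (1 + x) * hB q x M = hB q x M.+1 + x * (1 - q ^+ M) * hB q x M.-1.
Proof.
rewrite mulrDl mul1r {1}(hB_ext q x (ltnW (ltnSn M.+1))).
rewrite (@hB_ext _ q x M.-1 M.+1); last by case: M.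
rewrite /hB big_ord_recl [in RHS]big_ord_recl !Bn0 // !expr0.
rewrite !mulr_sumr -addrA -big_split -addrA -big_split /=.
congr (_ + _); apply: eq_bigr => i _.
rewrite /bump /= add1n exprS.
have := Hl hq M i. move=> E.
transitivity ((B q M i.+1 + B q M i) * (x * x ^+ i)); first by ring.
rewrite E; ring.
Qed.

Definition L {F : fieldType} (q x : F) (n m : nat) : F :=
  \sum_(k < n.+1) B q n k * B q m k * qpoch q q k * x ^+ k * hB q x (n + m - 2 * k)%N.

Lemma Cf (F : fieldType) (q : F) (hq : forall j, 1 - q ^+ j.+1 != 0) n m k :
  B q n.+1 k.+1 * B q m k.+1 * qpoch q q k.+1 =
  B q n k.+1 * B q m k.+1 * qpoch q q k.+1
  + B q n k * B q m k * qpoch q q k * (1 - q ^+ (n + m - 2 * k))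
  - (1 - q ^+ n) * B q n.-1 k * B q m k * qpoch q q k.
Proof.
transitivity (q ^+ (n - k) * B q n k * (B q m k.+1 * qpoch q q k.+1)
   + B q n k.+1 * B q m k.+1 * qpoch q q k.+1); first by rewrite P2 //; ring.
rewrite Rl //.
symmetry; transitivity (B q n k.+1 * B q m k.+1 * qpoch q q k.+1
  + B q n k * B q m k * qpoch q q k * (1 - q ^+ (n + m - 2 * k))
  - ((1 - q ^+ n) * B q n.-1 k) * B q m k * qpoch q q k); first by ring.
rewrite Ql //.
case: (leqP k n) => kn; last by rewrite (Bgt _ kn); ring.
case: (leqP k m) => km; last by rewrite (Bgt _ km); ring.
have -> : (n + m - 2 * k)%N = ((n - k) + (m - k))%N by lia.
rewrite exprD; ring.
Qed.

Lemma Lstep (F : fieldType) (q x : F) (hq : forall j, 1 - q ^+ j.+1 != 0) n m :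
  L q x n.+1 m = (1 + x) * L q x n m - x * (1 - q ^+ n) * L q x n.-1 m.
Proof.
pose c i := B q n i * B q m i * qpoch q q i.
pose M i := (n + m - 2 * i)%N.
have S1 : (1 + x) * L q x n m =
   \sum_(i < n.+1) c i * x ^+ i * hB q x (M i).+1
 + \sum_(i < n.+1) c i * x ^+ i.+1 * (1 - q ^+ (M i)) * hB q x (M i).-1.
  rewrite /L mulr_sumr -big_split /=; apply: eq_bigr => i _.
  transitivity (c i * x ^+ i * ((1 + x) * hB q x (M i))); first by rewrite /c /M; ring.
  rewrite hrec // exprS; ring.
have S2 : \sum_(i < n.+1) c i * x ^+ i * hB q x (M i).+1 =
   c 0%N * hB q x (M 0%N).+1 + \sum_(i < n.+1) c i.+1 * x ^+ i.+1 * hB q x (M i.+1).+1.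
  rewrite (@sum_ext _ (fun i => c i * x ^+ i * hB q x (M i).+1) n.+1 n.+2) //; last first.
    by move=> i le _; rewrite /c (Bgt _ le) !mul0r.
  by rewrite big_ord_recl expr0 mulr1.
have S3 : x * (1 - q ^+ n) * L q x n.-1 m =
   \sum_(i < n.+1) (1 - q ^+ n) * B q n.-1 i * B q m i * qpoch q q i * x ^+ i.+1
        * hB q x (n.-1 + m - 2 * i)%N.
  rewrite /L mulr_sumr.
  rewrite (@sum_ext _ (fun i => x * (1 - q ^+ n) * (B q n.-1 i * B q m i * qpoch q q i * x ^+ i
        * hB q x (n.-1 + m - 2 * i)%N)) n.-1.+1 n.+1); last 2 first.
  - lia.
  - by move=> i le _; rewrite (Bgt _ le) !(mul0r, mulr0).
  by apply: eq_bigr => i _; rewrite exprS; ring.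
rewrite S1 S2 S3 /L big_ord_recl /=.
rewrite -addrA -addrA -sumrB -big_split /=.
congr (_ + _).
  rewrite /c /M !Bn0 // qp0 expr0 mulr1.
  have -> : (n.+1 + m - 2 * 0)%N = (n + m - 2 * 0).+1%N by lia. by [].
apply: eq_bigr => i _.
have lin := ltn_ord i.
rewrite /bump /= add1n.
pose G := hB q x (M i).-1.
have Ea : B q m i.+1 * hB q x (n.+1 + m - 2 * i.+1)%N = B q m i.+1 * G.
  case: (leqP i.+1 m) => h; last by rewrite (Bgt _ h) !mul0r.
  rewrite /G /M; have -> : (n.+1 + m - 2 * i.+1)%N = (n + m - 2 * i).-1%N by lia. by [].
have Eb : B q n i.+1 * B q m i.+1 * hB q x (M i.+1).+1 = B q n i.+1 * B q m i.+1 * G.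
  case: (leqP i.+1 m) => h; last by rewrite (Bgt _ h) !(mul0r, mulr0).
  case: (leqP i.+1 n) => h2; last by rewrite (Bgt _ h2) !(mul0r, mulr0).
  rewrite /G /M; have -> : (n + m - 2 * i.+1).+1%N = (n + m - 2 * i).-1%N by lia. by [].
have Ec : (1 - q ^+ n) * hB q x (n.-1 + m - 2 * i)%N = (1 - q ^+ n) * G.
  have [n0|n0] := eqVneq n 0%N; first by rewrite [in X in (1 - q ^+ X)]n0 expr0 subrr !mul0r.
  have n0' : (0 < n)%N by rewrite lt0n.
  rewrite /G /M; have -> : (n.-1 + m - 2 * i)%N = (n + m - 2 * i).-1%N by lia. by [].
transitivity (B q n.+1 i.+1 * qpoch q q i.+1 * x ^+ i.+1 * (B q m i.+1 * hB q x (n.+1 + m - 2 * i.+1)%N)); first by ring.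
rewrite Ea.
symmetry.
transitivity (x ^+ i.+1 * (B q n i.+1 * B q m i.+1 * hB q x (M i.+1).+1) * qpoch q q i.+1
   + c i * x ^+ i.+1 * (1 - q ^+ M i) * G
   - (B q n.-1 i * B q m i * qpoch q q i * x ^+ i.+1) * ((1 - q ^+ n) * hB q x (n.-1 + m - 2 * i)%N)).
  by rewrite /c /G; ring.
rewrite Eb Ec.
rewrite [RHS](_ : _ = (B q n.+1 i.+1 * B q m i.+1 * qpoch q q i.+1) * x ^+ i.+1 * G); last by ring.
rewrite Cf // /c /M; ring.
Qed.

Lemma hB0 (F : fieldType) (q x : F) (hq : forall j, 1 - q ^+ j.+1 != 0) : hB q x 0 = 1.
Proof. by rewrite /hB big_ord1 Bn0 // expr0 mulr1. Qed.

Lemma rogers (F : fieldType) (q x : F) (hq : forall j, 1 - q ^+ j.+1 != 0) n m :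
  hB q x n * hB q x m = L q x n m.
Proof.
have step : forall n, (forall m, hB q x n * hB q x m = L q x n m) ->
   (forall m, hB q x n.-1 * hB q x m = L q x n.-1 m) ->
   forall m, hB q x n.+1 * hB q x m = L q x n.+1 m.
  move=> k I0 I1 m'.
  have -> : hB q x k.+1 = (1 + x) * hB q x k - x * (1 - q ^+ k) * hB q x k.-1.
    by rewrite hrec // addrK.
  by rewrite Lstep // mulrBl -!mulrA I0 I1.
have P0 : forall m, hB q x 0 * hB q x m = L q x 0 m.
  move=> m'; rewrite hB0 // mul1r /L big_ord1 !Bn0 // qp0 expr0 !mulr1 mul1r.
  by rewrite add0n muln0 subn0.
suff : (forall m, hB q x n * hB q x m = L q x n m) /\
       (forall m, hB q x n.+1 * hB q x m = L q x n.+1 m) by case.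
elim: n => [|n [IH0 IH1]]; first by split => //; apply: step.
split => //; apply: step => //.
Qed.

Lemma PnS (F : fieldType) (q x y : F) j : Pn q x y j.+1 = Pn q x y j * (x - q ^+ j * y).
Proof. by rewrite /Pn big_ord_recr. Qed.

Lemma Pn0 (F : fieldType) (q x y : F) : Pn q x y 0 = 1.
Proof. by rewrite /Pn big_ord0. Qed.

Lemma Eexp (F : fieldType) (q x y : F) (hq : forall j, 1 - q ^+ j.+1 != 0) k :
  x ^+ k = \sum_(j < k.+1) B q k j * Pn q x y j * y ^+ (k - j).
Proof.
elim: k => [|k IH]; first by rewrite big_ord1 Bn0 // Pn0 expr0 !mulr1.
rewrite exprS IH mulr_sumr.
rewrite [RHS]big_ord_recl Bn0 // Pn0 subn0 !mul1r.
have -> : \sum_(i < k.+1) B q k.+1 (bump 0 i) * Pn q x y (bump 0 i) * y ^+ (k.+1 - bump 0 i)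
  = \sum_(i < k.+1) (B q k i * Pn q x y i.+1 * y ^+ (k - i)
                     + q ^+ i.+1 * B q k i.+1 * Pn q x y i.+1 * y ^+ (k - i)).
  apply: eq_bigr => i _; rewrite /bump /= add1n subSS P1 //; ring.
rewrite big_split /=.
have -> : \sum_(i < k.+1) q ^+ i.+1 * B q k i.+1 * Pn q x y i.+1 * y ^+ (k - i)
   = \sum_(i < k.+2) q ^+ i * B q k i * Pn q x y i * y ^+ (k.+1 - i) - y ^+ k.+1.
  rewrite [X in _ = X - _]big_ord_recl /= expr0 Bn0 // Pn0 subn0 !mul1r addrC addKr.
  by apply: eq_bigr => i _; rewrite /bump /= add1n subSS.
rewrite -(@sum_ext _ (fun i => q ^+ i * B q k i * Pn q x y i * y ^+ (k.+1 - i)) k.+1 k.+2) //; last first.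
  by move=> i le _; rewrite (Bgt _ le) !(mul0r, mulr0).
have AC : forall a b c : F, c + (a + (b - c)) = a + b by move=> *; ring.
rewrite AC -big_split /=.
apply: eq_bigr => i _.
have li := ltn_ord i.
have -> : (k.+1 - i)%N = (k - i).+1 by lia.
rewrite PnS exprS; ring.
Qed.

Lemma Ble (F : fieldType) (q : F) n k : (k <= n)%N ->
  B q n k = qpoch q q n / (qpoch q q k * qpoch q q (n - k)).
Proof. by rewrite /B => ->. Qed.

Lemma Bsym (F : fieldType) (q : F) (hq : forall j, 1 - q ^+ j.+1 != 0) n k j :
  B q n k * B q (n - k) j = B q n j * B q (n - j) k.
Proof.
have nz := qp_neq0 hq.
case: (leqP (k + j) n) => h.
- rewrite !Ble; try lia.
  have -> : (n - k - j = n - j - k)%N by lia.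
  have := nz n; have := nz k; have := nz j; have := nz (n - k)%N; have := nz (n - j)%N;
  have := nz (n - j - k)%N.
  move: (qpoch q q n) (qpoch q q k) (qpoch q q j) (qpoch q q (n - k)) (qpoch q q (n - j))
    (qpoch q q (n - j - k)) => a b c d e f.
  move=> *. field; repeat (apply/andP; split); assumption.
- case: (leqP k n) => hk; last by rewrite (Bgt _ hk) mul0r (@Bgt _ _ (n - j)%N k) ?mulr0 //; lia.
  rewrite (@Bgt _ _ (n - k)%N j) ?mulr0; last by lia.
  case: (leqP j n) => hj; last by rewrite (Bgt _ hj) mul0r.
  by rewrite (@Bgt _ _ (n - j)%N k) ?mulr0 //; lia.
Qed.

Lemma Bcomp (F : fieldType) (q : F) (hq : forall j, 1 - q ^+ j.+1 != 0) n k j :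
  (j <= k)%N -> B q n k * B q k j = B q n j * B q (n - j) (k - j).
Proof.
have nz := qp_neq0 hq.
move=> jk.
case: (leqP k n) => h.
- rewrite !Ble; try lia.
  have -> : (n - j - (k - j) = n - k)%N by lia.
  have := nz n; have := nz k; have := nz j; have := nz (n - k)%N; have := nz (n - j)%N;
  have := nz (k - j)%N.
  move: (qpoch q q n) (qpoch q q k) (qpoch q q j) (qpoch q q (n - k)) (qpoch q q (n - j))
    (qpoch q q (k - j)) => a b c d e f.
  move=> *. field; repeat (apply/andP; split); assumption.
- rewrite (Bgt _ h) mul0r.
  case: (leqP j n) => hj; last by rewrite (Bgt _ hj) mul0r.
  by rewrite (@Bgt _ _ (n - j)%N (k - j)%N) ?mulr0 //; lia.
Qed.

Lemma star (F : fieldType) (q x y : F) (hq : forall j, 1 - q ^+ j.+1 != 0) n :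
  hB q x n = \sum_(j < n.+1) B q n j * Pn q x y j * hB q y (n - j).
Proof.
transitivity (\sum_(k < n.+1) \sum_(j < n.+1) B q n k * (B q k j * Pn q x y j * y ^+ (k - j))).
  rewrite /hB; apply: eq_bigr => k _.
  rewrite (@Eexp _ q x y hq k) mulr_sumr.
  apply: (@sum_ext _ (fun j => B q n k * (B q k j * Pn q x y j * y ^+ (k - j)))).
    exact: ltn_ord.
  by move=> i le _; rewrite (Bgt _ le) !(mul0r, mulr0).
rewrite exchange_big /=; apply: eq_bigr => j _.
have jn : (j <= n)%N by rewrite -ltnS.
rewrite /hB mulr_sumr.
have E : n.+1 = (j + (n - j).+1)%N by lia.
rewrite [LHS](_ : _ = \sum_(k < (j + (n - j).+1)%N)
    B q n k * (B q k j * Pn q x y j * y ^+ (k - j))); last first.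
  by rewrite -E.
rewrite big_split_ord /= big1 ?add0r; last first.
  by move=> i _; rewrite (Bgt _ (ltn_ord i)) !(mul0r, mulr0).
apply: eq_bigr => i _.
have -> : (j + i - j)%N = i by lia.
transitivity (B q n (j + i) * B q (j + i) j * Pn q x y j * y ^+ i); first by ring.
rewrite (Bcomp hq); last by rewrite leq_addr.
have -> : (j + i - j)%N = i by lia.
ring.
Qed.

Lemma id1 (F : fieldType) (q x y : F) (hq : forall j, 1 - q ^+ j.+1 != 0) n :
  \sum_(k < n.+1) B q n k * y ^+ k * (\sum_(j < (n - k).+1) B q (n - k) j * Pn q x y j)
  = hB q x n.
Proof.
rewrite (@star _ q x y hq n).
transitivity (\sum_(k < n.+1) \sum_(j < n.+1) B q n k * y ^+ k * (B q (n - k) j * Pn q x y j)).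
  apply: eq_bigr => k _; rewrite mulr_sumr.
  apply: (@sum_ext _ (fun j => B q n k * y ^+ k * (B q (n - k) j * Pn q x y j))).
    by rewrite ltnS leq_subr.
  by move=> i le _; rewrite (Bgt _ le) !(mul0r, mulr0).
rewrite exchange_big /=; apply: eq_bigr => j _.
rewrite /hB mulr_sumr.
have jn : (j <= n)%N by rewrite -ltnS.
rewrite [RHS](@sum_ext _ (fun k => B q n j * Pn q x y j * (B q (n - j) k * y ^+ k)) (n - j).+1 n.+1); last 2 first.
- by rewrite ltnS leq_subr.
- by move=> i le _; rewrite (Bgt _ le) !(mul0r, mulr0).
apply: eq_bigr => k _.
transitivity (B q n k * B q (n - k) j * y ^+ k * Pn q x y j); first by ring.
rewrite Bsym //; ring.
Qed.

Lemma RS_hB (F : fieldType) (q x : F) N : RS q x N = hB q x N.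
Proof. apply: eq_bigr => i _; by rewrite /B -ltnS ltn_ord. Qed.

Lemma RS2_B (F : fieldType) (q x y : F) N :
  RS2 q x y N = \sum_(j < N.+1) B q N j * Pn q x y j.
Proof. apply: eq_bigr => i _; by rewrite /B -ltnS ltn_ord. Qed.

Lemma main_field (F : fieldType) (q x y : F) (hq : forall j, 1 - q ^+ j.+1 != 0) n m :
  \sum_(k < (minn n m).+1)
     qbinom q n k * qbinom q m k * qpoch q q k * x ^+ k * RS q x (n + m - 2 * k)%N
  = (\sum_(k < n.+1) qbinom q n k * y ^+ k * RS2 q x y (n - k))
    * (\sum_(j < m.+1) qbinom q m j * y ^+ j * RS2 q x y (m - j)).
Proof.
have e1 : forall N, \sum_(k < N.+1) qbinom q N k * y ^+ k * RS2 q x y (N - k) = hB q x N.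
  move=> N; rewrite -(@id1 _ q x y hq N); apply: eq_bigr => i _.
  by rewrite RS2_B /B -ltnS ltn_ord.
rewrite !e1 rogers // /L.
transitivity (\sum_(k < (minn n m).+1)
   B q n k * B q m k * qpoch q q k * x ^+ k * hB q x (n + m - 2 * k)%N).
  apply: eq_bigr => i _; have := ltn_ord i; rewrite ltnS leq_min => /andP [h1 h2].
  by rewrite RS_hB /B h1 h2.
apply: (@sum_ext _ (fun k => B q n k * B q m k * qpoch q q k * x ^+ k * hB q x (n + m - 2 * k)%N)).
  by rewrite ltnS geq_minl.
move=> i le _.
case: (leqP i n) => h1; last by rewrite (Bgt _ h1) !mul0r.
have h2 : (m < i)%N by move: le h1; rewrite /minn; case: ifP; lia.
by rewrite (Bgt _ h2) !(mul0r, mulr0).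
Qed.

Local Open Scope complex_scope.

Theorem corollary3p5 (R : realType) (q x y : R[i]) (n m : nat) :
  `|q| < 1 ->
  \sum_(k < (minn n m).+1)
     qbinom q n k * qbinom q m k * qpoch q q k * x ^+ k * RS q x (n + m - 2 * k)%N
  = (\sum_(k < n.+1) qbinom q n k * y ^+ k * RS2 q x y (n - k))
    * (\sum_(j < m.+1) qbinom q m j * y ^+ j * RS2 q x y (m - j)).
Proof.
move=> hq1; apply: main_field => j.
rewrite subr_eq0 eq_sym; apply/negP => /eqP E.
have : `|q ^+ j.+1| < 1 by rewrite normrX exprn_ilt1.
by rewrite E normr1 ltxx.
Qed.
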